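(* Let $\rho_{\Delta_{S-1}}=\max_{\boldsymbol{q},\boldsymbol{q}'\in\Delta_{S-1}}\|\boldsymbol{q}-\boldsymbol{q}'\|_2$ be the diameter of the simplex $\Delta_{S-1}$. Let $\boldsymbol{q}^*=\arg\min_{\boldsymbol{q}\in\Delta_{S-1}}\boldsymbol{q}^\top\Gamma\boldsymbol{q}-\boldsymbol{q}^\top\boldsymbol{d}$ and $\hat{\boldsymbol{q}}=\arg\min_{\boldsymbol{q}\in\Delta_{S-1}}\boldsymbol{q}^\top\widehat\Gamma\boldsymbol{q}-\boldsymbol{q}^\top\hat{\boldsymbol{d}}$. If $\lambda_{\min}(\Gamma)>0$, then \[ \|\hat{\boldsymbol{q}}-\boldsymbol{q}^*\|_2\le\frac{S\big(\|\widehat\Gamma-\Gamma\|_\infty+\tfrac12\|\hat{\boldsymbol{d}}-\boldsymbol{d}\|_\infty\big)}{\lambda_{\min}(\Gamma)}\wedge\rho_{\Delta_{S-1}}, \] where $\|\widehat\Gamma-\Gamma\|_\infty$ is the element-wise maximum absolute entry of the matrix and $\|\hat{\boldsymbol{d}}-\boldsymbol{d}\|_\infty$ the $\ell_\infty$ norm of the vector.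
   Context: $\Delta_{S-1}=\{\boldsymbol{q}\in\mathbb{R}^S:\sum_s q_s=1,\ \min_s q_s\ge0\}$. Functions $\tau^{(1)},\ldots,\tau^{(S)}$ are square integrable with respect to a probability distribution $Q_{\boldsymbol{X}}$, and $\Gamma$ is the $S\times S$ matrix $\Gamma_{k,l}=\mathbb{E}_{Q_{\boldsymbol{X}}}[\tau^{(k)}(\boldsymbol{X})\tau^{(l)}(\boldsymbol{X})]$ with diagonal vector $\boldsymbol{d}=(\Gamma_{1,1},\ldots,\Gamma_{S,S})^\top$. Given functions $\hat\tau^{(1)},\ldots,\hat\tau^{(S)}$ (estimators of the $\tau^{(s)}$) and points $\boldsymbol{X}^Q_1,\ldots,\boldsymbol{X}^Q_{n_Q}$, define $\widehat\Gamma_{k,l}=\frac{1}{n_Q}\sum_{i=1}^{n_Q}\hat\tau^{(k)}(\boldsymbol{X}^Q_i)\hat\tau^{(l)}(\boldsymbol{X}^Q_i)$ and $\hat d_s=\frac{1}{n_Q}\sum_{i=1}^{n_Q}(\hat\tau^{(s)}(\boldsymbol{X}^Q_i))^2$ (so $\hat{\boldsymbol{d}}$ is the diagonal of $\widehat\Gamma$). $\lambda_{\min}(\Gamma)$ is the smallest eigenvalue of $\Gamma$. *)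

(* Defs.v *)
From HB Require Import structures.
From mathcomp Require Import all_boot all_order all_algebra.
From mathcomp Require Import all_classical all_reals all_analysis.
Set Implicit Arguments. Unset Strict Implicit. Unset Printing Implicit Defensive.
Import Order.TTheory GRing.Theory Num.Theory.
Local Open Scope ring_scope.

Definition simplex (R : realType) (S : nat) : set 'cV[R]_S :=
  [set q | (\sum_(s < S) q s ord0 = 1) /\ (forall s, 0 <= q s ord0)].

Definition norm2 (R : realType) (S : nat) (v : 'cV[R]_S) : R :=
  Num.sqrt (\sum_(s < S) v s ord0 ^+ 2).

Definition vnorm_inf (R : realType) (S : nat) (v : 'cV[R]_S) : R :=
  \big[Num.max/0]_(s < S) `|v s ord0|.

Definition mnorm_inf (R : realType) (S : nat) (A : 'M[R]_S) : R :=
  \big[Num.max/0]_(k < S) \big[Num.max/0]_(l < S) `|A k l|.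

Definition simplex_diam (R : realType) (S : nat) : R :=
  sup [set r : R | exists q q' : 'cV[R]_S, [/\ @simplex R S q, @simplex R S q' & r = norm2 (q - q')]].

Definition qobj (R : realType) (S : nat) (G : 'M[R]_S) (d : 'cV[R]_S)
  (q : 'cV[R]_S) : R :=
  (q^T *m G *m q) ord0 ord0 - (q^T *m d) ord0 ord0.

Definition is_argmin_simplex (R : realType) (S : nat) (G : 'M[R]_S)
  (d : 'cV[R]_S) (q : 'cV[R]_S) : Prop :=
  @simplex R S q /\ forall q', @simplex R S q' -> qobj G d q <= qobj G d q'.

Definition is_lambda_min (R : realType) (S : nat) (A : 'M[R]_S) (lam : R)
  : Prop :=
  eigenvalue A lam /\ forall a, eigenvalue A a -> lam <= a.

(* Population Gram matrix Gamma_{k,l} = E_Q[tau^(k)(X) tau^(l)(X)] *)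
Definition Gram (d : measure_display) (T : measurableType d) (R : realType)
  (P : probability T R) (S : nat) (tau : 'I_S -> T -> R) : 'M[R]_S :=
  \matrix_(k, l) Rintegral P setT (fun x => tau k x * tau l x).

Definition emp_Gram (T : Type) (R : realType) (S n : nat)
  (tauh : 'I_S -> T -> R) (X : 'I_n -> T) : 'M[R]_S :=
  \matrix_(k, l) (n%:R^-1 * \sum_(i < n) tauh k (X i) * tauh l (X i)).

Definition diagv (R : realType) (S : nat) (A : 'M[R]_S) : 'cV[R]_S :=
  \col_s A s s.

(* Main.v *)
Require Import Defs.
From HB Require Import structures.
From mathcomp Require Import all_boot all_order all_algebra.
From mathcomp Require Import all_classical all_reals all_analysis.
From mathcomp Require Import ring lra.
Import Order.TTheory GRing.Theory Num.Theory numFieldNormedType.Exports.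
Local Open Scope ring_scope.

Section Alg.
Variable R : realType.

Definition P {n} (C : 'M[R]_n) (x y : 'rV[R]_n) : R := (x *m C *m y^T) 0 0.

Lemma PE {n} (C : 'M[R]_n) x y :
  P C x y = \sum_i \sum_j x 0 i * C i j * y 0 j.
Proof.
rewrite /P mxE exchange_big /=; apply: eq_bigr => j _.
rewrite mxE big_distrl /=; apply: eq_bigr => i _; by rewrite !mxE.
Qed.

Lemma PDl {n} (C : 'M[R]_n) x y z : P C (x + y) z = P C x z + P C y z.
Proof. by rewrite /P !mulmxDl mxE. Qed.
Lemma PDr {n} (C : 'M[R]_n) x y z : P C z (x + y) = P C z x + P C z y.
Proof. by rewrite /P linearD /= mulmxDr mxE. Qed.
Lemma PZl {n} (C : 'M[R]_n) a x z : P C (a *: x) z = a * P C x z.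
Proof. by rewrite /P -!scalemxAl mxE. Qed.
Lemma PZr {n} (C : 'M[R]_n) a x z : P C z (a *: x) = a * P C z x.
Proof. by rewrite /P linearZ /= -scalemxAr mxE. Qed.
Lemma PNl {n} (C : 'M[R]_n) x z : P C (- x) z = - P C x z.
Proof. by rewrite -scaleN1r PZl mulN1r. Qed.
Lemma PNr {n} (C : 'M[R]_n) x z : P C z (- x) = - P C z x.
Proof. by rewrite -scaleN1r PZr mulN1r. Qed.
Lemma PBl {n} (C : 'M[R]_n) x y z : P C (x - y) z = P C x z - P C y z.
Proof. by rewrite PDl PNl. Qed.
Lemma PBr {n} (C : 'M[R]_n) x y z : P C z (x - y) = P C z x - P C z y.
Proof. by rewrite PDr PNr. Qed.
Lemma PsubC {n} (C D : 'M[R]_n) x z : P (C - D) x z = P C x z - P D x z.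
Proof.
rewrite !PE -sumrB; apply: eq_bigr => i _; rewrite -sumrB; apply: eq_bigr => j _.
by rewrite !mxE; ring.
Qed.
Lemma Psym {n} (C : 'M[R]_n) x y : C^T = C -> P C x y = P C y x.
Proof.
move=> sC; rewrite !PE exchange_big /=; apply: eq_bigr => i _; apply: eq_bigr => j _.
have -> : C j i = C i j by rewrite -{1}sC mxE.
by ring.
Qed.

Lemma lin_lim (A B : R) : (forall t, 0 < t -> t <= 1 -> 0 <= A + t * B) -> 0 <= A.
Proof.
move=> H; rewrite leNgt; apply/negP => A0.
set t := Num.min 1 (- A / (`|B| + 1)).
have B1 : 0 < `|B| + 1 by rewrite ltr_wpDl.
have q0 : 0 < - A / (`|B| + 1) by rewrite divr_gt0 // oppr_gt0.
have t0 : 0 < t by rewrite lt_min ltr01 q0.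
have t1 : t <= 1 by rewrite ge_min lexx.
have t2 : t * (`|B| + 1) <= - A.
  have : t <= - A / (`|B| + 1) by rewrite ge_min lexx orbT.
  by rewrite ler_pdivlMr.
have h := H t t0 t1.
have hB : t * B <= t * `|B| by apply: ler_wpM2l; [exact: ltW | exact: ler_norm].
nra.
Qed.

Lemma P1 {n} (x : 'rV[R]_n) : P 1%:M x x = \sum_i x 0 i ^+ 2.
Proof. by rewrite /P mulmx1 mxE; apply: eq_bigr => i _; rewrite mxE expr2. Qed.

Lemma P1_ge0 {n} (x : 'rV[R]_n) : 0 <= P 1%:M x x.
Proof. by rewrite P1 sumr_ge0 // => i _; rewrite sqr_ge0. Qed.

Lemma P1_eq0 {n} {x : 'rV[R]_n} : P 1%:M x x = 0 -> x = 0.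
Proof.
rewrite P1 => /psumr_eq0P H; apply/rowP => i; rewrite mxE.
by apply/eqP; rewrite -sqrf_eq0; apply/eqP; apply: H => // j _; rewrite sqr_ge0.
Qed.

Lemma P0 {n} (C : 'M[R]_n) : P C 0 0 = 0.
Proof. by rewrite -(scale0r (0 : 'rV[R]_n)) PZl mul0r. Qed.

Lemma PscaleC {n} (C : 'M[R]_n) a x y : P (a *: C) x y = a * P C x y.
Proof. by rewrite /P -scalemxAr -scalemxAl mxE. Qed.

Lemma cont_sum {n} (I : Type) (r : seq I) (F : I -> 'rV[R]_n -> R) :
  (forall i, continuous (F i)) -> continuous (fun x => \sum_(i <- r) F i x).
Proof.
move=> Fc; elim: r => [|a r IH].
  have -> : (fun x : 'rV[R]_n => \sum_(i <- [::]) F i x) = fun=> 0.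
    by apply: funext => x; rewrite big_nil.
  exact: cst_continuous.
have -> : (fun x : 'rV[R]_n => \sum_(i <- a :: r) F i x) =
   (F a + (fun x => \sum_(i <- r) F i x)).
  by apply: funext => x; rewrite big_cons.
by move=> x; apply: continuousD; [exact: Fc | exact: IH].
Qed.

Lemma Pcont {n} (C : 'M[R]_n) : continuous (fun x : 'rV[R]_n => P C x x).
Proof.
have -> : (fun x : 'rV[R]_n => P C x x) =
  (fun x => \sum_(i <- index_enum 'I_n) \sum_(j <- index_enum 'I_n) x 0 i * C i j * x 0 j).
  by apply: funext => x; rewrite PE.
apply: cont_sum => i; apply: cont_sum => j.
move=> x.
apply: (continuousM (s := fun x : 'rV[R]_n => x 0 i * C i j) (t := fun x : 'rV[R]_n => x 0 j)); last exact: coord_continuous.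
apply: (continuousM (s := fun x : 'rV[R]_n => x 0 i) (t := fun=> C i j)); first exact: coord_continuous.
exact: cst_continuous.
Qed.


Lemma sphere_compact n : compact [set x : 'rV[R]_n | P 1%:M x x = 1].
Proof.
apply: bounded_closed_compact.
  exists 1; split; first by rewrite num_real.
  move=> M M1 v /= Av.
  rewrite [`|v|]/Num.norm /= mx_normrE.
  apply: (big_ind (fun y => y <= M)); first by rewrite ltW // (lt_trans ltr01).
    by move=> a b aM bM; rewrite ge_max aM bM.
  move=> [i j] _ /=.
  have -> : i = 0 by apply: ord1.
  have vj : v 0 j ^+ 2 <= 1.
    rewrite -Av P1 (bigD1 j) //= lerDl sumr_ge0 // => k _; exact: sqr_ge0.
  have : `|v 0 j| <= 1 by rewrite ler_norml; apply/andP; split; nra.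
  move=> h; apply: le_trans h _; exact: ltW.
have h1 : closed [set x : R | x = 1] by apply: closed_eq.
have := @preimage_closed _ _ (fun x : 'rV[R]_n => P 1%:M x x) [set x : R | x = 1] (fun x _ => @Pcont n 1%:M x) h1.
by [].
Qed.

Lemma psd_of_eig {n} (B : 'M[R]_n) lam : B^T = B ->
  (forall a, eigenvalue B a -> lam <= a) ->
  forall x, lam * P 1%:M x x <= P B x x.
Proof.
case: n B => [|n] B sB Hev x.
  by rewrite !PE !big_ord0 mulr0.
set A : set 'rV[R]_n.+1 := fun x => P 1%:M x x = 1.
have A0 : (A !=set0)%classic.
  exists (delta_mx 0 0); rewrite /A /= P1 (bigD1 ord0) //= big1 => [|i ne].
    by rewrite !mxE eqxx expr1n addr0.
  by rewrite !mxE (negbTE ne) andbF expr0n.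
have [c cA cmin] := EVT_min_rV (f := fun x => P B x x) A0 (@sphere_compact n.+1)
  (continuous_subspaceT (fun x => Pcont B x)).
have {}cA : P 1%:M c c = 1 by move: cA; rewrite inE.
set m := P B c c.
have Hm : forall x, m * P 1%:M x x <= P B x x.
  move=> y; have := P1_ge0 y; rewrite le_eqVlt => /orP[/eqP s0|s0].
    by rewrite (P1_eq0 (esym s0)) !P0 mulr0.
  set s := P 1%:M y y in s0 *.
  set u := (Num.sqrt s)^-1.
  have su : u * u * s = 1.
    by rewrite /u -invrM ?sqrtr_gt0 ?unitfE ?gt_eqF ?sqrtr_gt0 // -expr2 sqr_sqrtr ?ltW // mulVf ?gt_eqF.
  have : m <= P B (u *: y) (u *: y).
    by apply: cmin; rewrite inE /A /= PZl PZr mulrA su.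
  rewrite PZl PZr mulrA => h.
  have : m * s <= u * u * P B y y * s by rewrite ler_pM2r.
  have -> : u * u * P B y y * s = P B y y by rewrite mulrAC su mul1r.
  by [].
set C' := B - m *: 1%:M.
have sC' : C'^T = C' by rewrite /C' linearB /= linearZ /= trmx1 sB.
have PC : forall y, P C' y y = P B y y - m * P 1%:M y y by move=> y; rewrite PsubC PscaleC.
have PCc : P C' c c = 0 by rewrite PC cA mulr1 /m subrr.
set w := c *m C'.
have Pcw : P C' c w = P 1%:M w w by rewrite /P mulmx1.
have N0 : P 1%:M w w <= 0.
  have H : forall t, 0 <= t * (2 * P 1%:M w w) + t ^+ 2 * P C' w w.
    move=> t; have := Hm (c + t *: w); rewrite -subr_ge0 -PC.
    rewrite PDl !PDr !PZl !PZr PCc (Psym C' w c sC') Pcw.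
    move=> h; apply: le_trans h _; rewrite le_eqVlt; apply/orP; left; apply/eqP; ring.
  have : 0 <= - (2 * P 1%:M w w).
    apply: (@lin_lim (- (2 * P 1%:M w w)) (P C' w w)) => t t0 t1; have := H (- t).
    have -> : (- t) ^+ 2 = t * t by rewrite sqrrN expr2.
    move=> h; have : 0 <= t * (- (2 * P 1%:M w w) + t * P C' w w) by nra.
    by move=> h2; rewrite -(pmulr_rge0 _ t0).
  by move=> h; rewrite oppr_ge0 pmulr_rle0 in h.
have w0 : w = 0 by apply: P1_eq0; apply/eqP; rewrite eq_le N0 P1_ge0.
have ev : eigenvalue B m.
  apply/eigenvalueP; exists c.
    apply/eqP; rewrite -subr_eq0; move/eqP: w0; rewrite /w /C' mulmxBr.
    by rewrite -scalemxAr mulmx1.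
  by apply/eqP => c0; move: cA; rewrite c0 P0 => /eqP; rewrite eq_sym oner_eq0.
have lm := Hev _ ev.
by apply: le_trans (Hm x); apply: ler_wpM2r; [exact: P1_ge0 | exact: lm].
Qed.


Definition L {n} (d : 'cV[R]_n) (x : 'rV[R]_n) : R := (x *m d) 0 0.

Lemma LE {n} (d : 'cV[R]_n) x : L d x = \sum_i x 0 i * d i 0.
Proof. by rewrite /L mxE. Qed.
Lemma LD {n} (d : 'cV[R]_n) x y : L d (x + y) = L d x + L d y.
Proof. by rewrite /L mulmxDl mxE. Qed.
Lemma LZ {n} (d : 'cV[R]_n) a x : L d (a *: x) = a * L d x.
Proof. by rewrite /L -scalemxAl mxE. Qed.
Lemma LN {n} (d : 'cV[R]_n) x : L d (- x) = - L d x.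
Proof. by rewrite -scaleN1r LZ mulN1r. Qed.
Lemma LsubC {n} (d e : 'cV[R]_n) x : L (d - e) x = L d x - L e x.
Proof. by rewrite !LE -sumrB; apply: eq_bigr => i _; rewrite !mxE mulrBr. Qed.

Lemma qobjE {n} (G : 'M[R]_n) d q : qobj G d q = P G q^T q^T - L d q^T.
Proof. by rewrite /qobj /P /L trmxK. Qed.

Lemma simplex_comb {n} (q q' : 'cV[R]_n) t : simplex q -> simplex q' ->
  0 <= t -> t <= 1 -> simplex (q + t *: (q' - q)).
Proof.
move=> [s1 p1] [s2 p2] t0 t1; split.
  under eq_bigr do rewrite !mxE.
  rewrite big_split /= -mulr_sumr sumrB s1 s2 subrr mulr0 addr0 //.
move=> s; rewrite !mxE; have := p1 s; have := p2 s; nra.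
Qed.

Lemma FO {n} (G : 'M[R]_n) d q q' : G^T = G -> is_argmin_simplex G d q -> simplex q' ->
  0 <= 2 * P G q^T (q' - q)^T - L d (q' - q)^T.
Proof.
move=> sG [sq qmin] sq'.
set v := (q' - q)^T.
apply: (@lin_lim _ (P G v v)) => t t0 t1.
have h := qmin _ (simplex_comb q q' t sq sq' (ltW t0) t1).
move: h; rewrite !qobjE linearD /= linearZ /= -/v.
rewrite !PDl !PDr !PZl !PZr LD LZ (Psym G v q^T sG) => h.
have : 0 <= t * (2 * P G q^T v - L d v + t * P G v v).
  rewrite -subr_ge0 in h; apply: le_trans h _; rewrite le_eqVlt; apply/orP; left; apply/eqP; ring.
by rewrite pmulr_rge0.
Qed.

Lemma le_bigmax_seq (I : eqType) (r : seq I) (F : I -> R) i :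
  i \in r -> F i <= \big[Num.max/0]_(j <- r) F j.
Proof.
elim: r => // a r IH; rewrite inE big_cons => /orP[/eqP->|ir].
  by rewrite le_max lexx.
by rewrite le_max (IH ir) orbT.
Qed.

Lemma bigmax_ge0 (I : Type) (r : seq I) (F : I -> R) : 0 <= \big[Num.max/0]_(j <- r) F j.
Proof. by elim: r => [|a r IH]; rewrite ?big_nil ?big_cons // le_max IH orbT. Qed.

Lemma mnorm_ge {n} (E : 'M[R]_n) i j : `|E i j| <= mnorm_inf E.
Proof.
rewrite /mnorm_inf.
apply: le_trans (@le_bigmax_seq _ _ (fun k => \big[Num.max/0]_(l < n) `|E k l|) i (mem_index_enum i)).
exact: (@le_bigmax_seq _ _ (fun l => `|E i l|) j (mem_index_enum j)).
Qed.

Lemma vnorm_ge {n} (e : 'cV[R]_n) i : `|e i 0| <= vnorm_inf e.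
Proof. exact: (@le_bigmax_seq _ _ (fun l => `|e l 0|) i (mem_index_enum i)). Qed.

Lemma P_bound {n} (E : 'M[R]_n) x y :
  `|P E x y| <= mnorm_inf E * (\sum_i `|x 0 i|) * (\sum_j `|y 0 j|).
Proof.
rewrite PE; apply: le_trans (ler_norm_sum _ _ _) _.
rewrite -mulrA mulr_suml mulr_sumr; apply: ler_sum => i _.
apply: le_trans (ler_norm_sum _ _ _) _.
rewrite !mulr_sumr; apply: ler_sum => j _.
rewrite !normrM.
have := mnorm_ge E i j; have := normr_ge0 (x 0 i); have := normr_ge0 (y 0 j).
have := normr_ge0 (E i j).
have := mulr_ge0 (normr_ge0 (x 0 i)) (normr_ge0 (y 0 j)).
set X := `|x 0 i|; set Y := `|y 0 j|; set Z := `|E i j|; move=> h1 h2 h3 h4 h5.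
have : 0 <= (mnorm_inf E - Z) * (X * Y) by rewrite mulr_ge0 // subr_ge0.
move=> h6; apply: le_trans (_ : Z * (X * Y) <= _); first by rewrite le_eqVlt; apply/orP; left; apply/eqP; ring.
nra.
Qed.

Lemma L_bound {n} (e : 'cV[R]_n) y : `|L e y| <= vnorm_inf e * (\sum_j `|y 0 j|).
Proof.
rewrite LE; apply: le_trans (ler_norm_sum _ _ _) _.
rewrite mulr_sumr; apply: ler_sum => j _; rewrite normrM.
have := vnorm_ge e j; have := normr_ge0 (y 0 j); have := normr_ge0 (e j 0); nra.
Qed.

Lemma CS {n} (x : 'rV[R]_n) : (\sum_i `|x 0 i|) ^+ 2 <= n%:R * P 1%:M x x.
Proof.
rewrite P1 expr2 mulr_suml.
set a := fun i : 'I_n => x 0 i ^+ 2.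
set T := \sum_i x 0 i ^+ 2.
have e1 : forall i, \sum_(j < n) (a i + a j) / 2 = (n%:R * a i + T) / 2.
  move=> i; rewrite -mulr_suml big_split /= sumr_const card_ord mulr_natl //.
have e2 : \sum_(i < n) (n%:R * a i + T) / 2 = n%:R * T.
  rewrite -mulr_suml big_split /= -mulr_sumr sumr_const card_ord -mulr_natl.
  have -> : \sum_(i < n) a i = T by [].
  by rewrite mulr1 -[T *+ n]mulr_natl; field.
rewrite -e2; under [X in _ <= X]eq_bigr do rewrite -e1.
apply: ler_sum => i _; rewrite mulr_sumr; apply: ler_sum => j _.
rewrite /a.
have e3 : `|x 0 i| ^+ 2 = x 0 i ^+ 2 by rewrite real_normK ?num_real.
have e4 : `|x 0 j| ^+ 2 = x 0 j ^+ 2 by rewrite real_normK ?num_real.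
rewrite -e3 -e4.
have := sqr_ge0 (`|x 0 i| - `|x 0 j|); nra.
Qed.


Lemma simplex_le1 {n} {q : 'cV[R]_n} s : simplex q -> q s 0 <= 1.
Proof.
move=> [s1 p1]; rewrite -s1 (bigD1 s) //= lerDl sumr_ge0 // => i _; exact: p1.
Qed.

Lemma simplex_pos {n} (q : 'cV[R]_n) : simplex q -> (0 < n)%N.
Proof.
case: n q => [|n] q [s1 _] //.
by move: s1; rewrite big_ord0 => /eqP; rewrite eq_sym oner_eq0.
Qed.

Lemma norm2_simplex_le {n} (q q' : 'cV[R]_n) : simplex q -> simplex q' -> norm2 (q - q') <= 2.
Proof.
move=> sq sq'.
have h : \sum_(s < n) (q - q') s ord0 ^+ 2 <= 4.
  apply: le_trans (_ : \sum_(s < n) (q s 0 + q' s 0) <= _).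
    apply: ler_sum => s _; rewrite !mxE.
    have := simplex_le1 s sq; have := simplex_le1 s sq'.
    have := sq.2 s; have := sq'.2 s; nra.
  by rewrite big_split /= sq.1 sq'.1; lra.
rewrite /norm2; apply: le_trans (ler_wsqrtr h) _.
have -> : (4 : R) = 2 ^+ 2 by rewrite expr2; lra.
by rewrite sqrtr_sqr ger0_norm.
Qed.

Lemma main_gen S (G Gh : 'M[R]_S) (d dh : 'cV[R]_S) lam qs qh :
  G^T = G -> Gh^T = Gh -> (forall a, eigenvalue G a -> lam <= a) -> 0 < lam ->
  is_argmin_simplex G d qs -> is_argmin_simplex Gh dh qh ->
  norm2 (qh - qs) <= Num.min (S%:R * (mnorm_inf (Gh - G) + 2^-1 * vnorm_inf (dh - d)) / lam)
                             (simplex_diam R S).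
Proof.
move=> sG sGh Hev lam0 Hs Hh.
have sqs := Hs.1; have sqh := Hh.1.
have S1 : 1 <= S%:R :> R.
  by rewrite ler1n; exact: simplex_pos sqs.
set D := (qh - qs)^T.
have FO1 := FO G d qs qh sG Hs sqh.
have FO2 := FO Gh dh qh qs sGh Hh sqs.
have eD : (qs - qh)^T = - D by rewrite /D -linearN /= opprB.
have eq : qs^T = qh^T - D by rewrite /D linearB /= opprB addrC subrK.
rewrite eD PNr LN in FO2.
rewrite -/D eq PBl in FO1.
set M := mnorm_inf (Gh - G).
set v := vnorm_inf (dh - d).
set a := \sum_i `|D 0 i|.
set N := P 1%:M D D.
have M0 : 0 <= M by exact: bigmax_ge0.
have v0 : 0 <= v by exact: bigmax_ge0.
have a0 : 0 <= a by rewrite sumr_ge0 // => i _; rewrite normr_ge0.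
have N0 : 0 <= N by exact: P1_ge0.
have sq1 : \sum_i `|qh^T 0 i| = 1.
  rewrite -sqh.1; apply: eq_bigr => i _; rewrite mxE ger0_norm //; exact: sqh.2.
have b1 := P_bound (Gh - G) qh^T D; rewrite sq1 mulr1 -/M -/a in b1.
have b2 := L_bound (dh - d) D; rewrite -/v -/a in b2.
have c1 := ler_norm (- P (Gh - G) qh^T D); rewrite normrN in c1.
have c2 := ler_norm (L (dh - d) D).
rewrite PsubC in b1 c1; rewrite LsubC in b2 c2.
set K := M + 2^-1 * v.
have K0 : 0 <= K by rewrite addr_ge0 // mulr_ge0 // invr_ge0; lra.
have hG : P G D D <= K * a.
  rewrite /K; lra.
have hl := psd_of_eig G lam sG Hev D; rewrite -/N in hl.
have cs := CS D; rewrite -/a -/N in cs.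
have eN : norm2 (qh - qs) = Num.sqrt N.
  rewrite /norm2 /N P1; congr Num.sqrt; apply: eq_bigr => i _; by rewrite /D [in RHS]mxE.
rewrite eN le_min; apply/andP; split.
  set X := S%:R * K / lam.
  have X0 : 0 <= X by apply: divr_ge0; [apply: mulr_ge0 => //; exact: ler0n | exact: ltW].
  have NX : N <= X ^+ 2.
    have h1 : lam * N <= K * a by lra.
    have h2 : (lam * N) ^+ 2 <= (K * a) ^+ 2.
      have : 0 <= lam * N by rewrite mulr_ge0 // ltW.
      nra.
    have h3 : (K * a) ^+ 2 <= K ^+ 2 * (S%:R * N).
      rewrite exprMn; apply: ler_wpM2l; [exact: sqr_ge0 | exact: cs].
    have h4 : lam ^+ 2 * N <= K ^+ 2 * S%:R ^+ 2.
      have := le_trans h2 h3; move: N0; rewrite le_eqVlt => /orP[/eqP <-|Np].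
        by move=> _; rewrite mulr0 mulr_ge0 // sqr_ge0.
      move=> h5; have h6 : lam ^+ 2 * N <= K ^+ 2 * S%:R.
        rewrite -(ler_pM2r Np).
        have e1 : lam ^+ 2 * N * N = (lam * N) ^+ 2 by ring.
        have e2 : K ^+ 2 * S%:R * N = K ^+ 2 * (S%:R * N) by ring.
        by rewrite e1 e2.
      apply: le_trans h6 _; apply: ler_wpM2l; first exact: sqr_ge0.
      rewrite expr2 ler_peMl //; lra.
    have eX : X ^+ 2 * lam ^+ 2 = K ^+ 2 * S%:R ^+ 2.
      rewrite /X; field; rewrite gt_eqF //.
    have l2 : 0 < lam ^+ 2 by rewrite exprn_gt0.
    rewrite -(ler_pM2r l2) eX mulrC //.
  apply: le_trans (ler_wsqrtr NX) _; by rewrite sqrtr_sqr ger0_norm.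
apply: ub_le_sup.
  exists 2 => r [q [q' [s1 s2 ->]]]; exact: norm2_simplex_le.
exists qh, qs; split => //; by rewrite -eN.
Qed.

End Alg.

Lemma Gram_sym (d : measure_display) (T : measurableType d) (R : realType)
  (P : probability T R) (S : nat) (tau : 'I_S -> T -> R) : (Gram P tau)^T = Gram P tau.
Proof.
apply/matrixP => i j; rewrite !mxE; congr (Rintegral _ _ _).
by apply: funext => x; rewrite mulrC.
Qed.

Lemma emp_Gram_sym (T : Type) (R : realType) (S n : nat)
  (tauh : 'I_S -> T -> R) (X : 'I_n -> T) : (emp_Gram tauh X)^T = emp_Gram tauh X.
Proof.
apply/matrixP => i j; rewrite !mxE; congr (_ * _).
by apply: eq_bigr => k _; rewrite mulrC.
Qed.

Theorem lemma1 (d : measure_display) (T : measurableType d) (R : realType)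
  (P : probability T R) (S nQ : nat)
  (tau tauh : 'I_S -> T -> R) (XQ : 'I_nQ -> T)
  (Htau_meas : forall s, measurable_fun setT (tau s))
  (Htau_L2 : forall s, P.-integrable setT (fun x => ((tau s x) ^+ 2)%:E))
  (HnQ : (0 < nQ)%N)
  (lam : R) (Hlam : is_lambda_min (Gram P tau) lam) (Hlam_pos : 0 < lam)
  (qstar qhat : 'cV[R]_S)
  (Hqstar : is_argmin_simplex (Gram P tau) (diagv (Gram P tau)) qstar)
  (Hqhat : is_argmin_simplex (emp_Gram tauh XQ) (diagv (emp_Gram tauh XQ)) qhat) :
  norm2 (qhat - qstar) <=
    Num.min
      (S%:R * (mnorm_inf (emp_Gram tauh XQ - Gram P tau)
               + 2^-1 * vnorm_inf (diagv (emp_Gram tauh XQ) - diagv (Gram P tau)))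
        / lam)
      (simplex_diam R S).
Proof.
have h := (@main_gen R S _ _ _ _ lam qstar qhat (@Gram_sym _ _ _ P _ tau) (@emp_Gram_sym _ _ _ _ tauh XQ) Hlam.2 Hlam_pos Hqstar Hqhat).
exact h.
Qed.
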